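(* Let $P$ be a simple orthogonal polygon. If $u$ is an NE-reflex vertex and $v$ is an SW-reflex vertex of $P$ with $v.x\ge u.x$ and $v.y\ge u.y$, then $\{0^\circ,90^\circ\}$-Kernel$_\theta(P)=\emptyset$ for every $\theta\in(0,\frac{\pi}{2})$. Similarly, if $u'$ is an NW-reflex vertex and $v'$ is an SE-reflex vertex of $P$ with $v'.x\le u'.x$ and $v'.y\ge u'.y$, then $\{0^\circ,90^\circ\}$-Kernel$_\theta(P)=\emptyset$ for every $\theta\in(0,\frac{\pi}{2})$.
   Context: An orthogonal polygon is a polygon all of whose edges are horizontal or vertical. An edge is an N-edge (resp. S-, E-, W-edge) if it bounds the polygon from the north (resp. south, east, west), i.e. the interior of $P$ lies immediately below (resp. above, to the left, to the right) of it. A reflex vertex is an NE-reflex vertex if it is incident to an N-edge and an E-edge; NW-, SE-, SW-reflex vertices are defined analogously. For a vertex $w$, $w.x$ and $w.y$ are its coordinates. For an angle $\beta$, a curve is $\beta$-convex if its intersection with every line forming counterclockwise angle $\beta$ with the positive $x$-axis is connected. For $\theta\in[0,\pi/2)$, two points $p,q\in P$ see each other with respect to $\{0^\circ,90^\circ\}$ rotated by $\theta$ if some curve contained in $P$ connecting them is both $\theta$-convex and $(\theta+90^\circ)$-convex; $\{0^\circ,90^\circ\}$-Kernel$_\theta(P)$ is the set of points of $P$ that see every point of $P$ in this sense. *)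

(* Defs.v *)
From HB Require Import structures.
From mathcomp Require Import all_boot all_order all_algebra.
From mathcomp Require Import all_classical all_reals all_analysis.
Set Implicit Arguments. Unset Strict Implicit. Unset Printing Implicit Defensive.
Import Order.TTheory GRing.Theory Num.Theory.
Import numFieldNormedType.Exports.
Local Open Scope classical_set_scope.
Local Open Scope ring_scope.

Section Polygon.
Variable R : realType.
Notation pt := (R * R)%type.

(* A polygon is given by its cyclic list of vertices v_0, ..., v_{n-1};
   edges are the segments [v_i, v_{i+1}] (indices mod n). *)
Definition vtx (s : seq pt) (i : nat) : pt := nth (0, 0) s (i %% size s)%N.

Definition seg (a b : pt) : set pt :=
  [set p | exists t : R, 0 <= t <= 1 /\
     p = (a.1 + t * (b.1 - a.1), a.2 + t * (b.2 - a.2))].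

Definition oseg (a b : pt) : set pt :=
  [set p | exists t : R, 0 < t < 1 /\
     p = (a.1 + t * (b.1 - a.1), a.2 + t * (b.2 - a.2))].

Definition edge (s : seq pt) (i : nat) : set pt := seg (vtx s i) (vtx s i.+1).

Definition horizontal (a b : pt) : Prop := a.2 = b.2 /\ a.1 <> b.1.
Definition vertical (a b : pt) : Prop := a.1 = b.1 /\ a.2 <> b.2.

(* orthogonal polygon: every edge is horizontal or vertical, and
   consecutive edges alternate (no degenerate or collinear vertices) *)
Definition orthogonal_polygon (s : seq pt) : Prop :=
  (4 <= size s)%N /\
  forall i, (i < size s)%N ->
    (horizontal (vtx s i) (vtx s i.+1) /\ vertical (vtx s i.+1) (vtx s i.+2)) \/
    (vertical (vtx s i) (vtx s i.+1) /\ horizontal (vtx s i.+1) (vtx s i.+2)).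

Definition simple_polygon (s : seq pt) : Prop :=
  forall i j, (i < size s)%N -> (j < size s)%N -> i <> j ->
    (j = (i.+1 %% size s)%N -> edge s i `&` edge s j = [set vtx s i.+1]) /\
    (j <> (i.+1 %% size s)%N -> i <> (j.+1 %% size s)%N -> edge s i `&` edge s j = set0).

Definition simple_orthogonal_polygon (s : seq pt) : Prop :=
  orthogonal_polygon s /\ simple_polygon s.

Definition boundary (s : seq pt) : set pt :=
  [set p | exists i, (i < size s)%N /\ edge s i p].

Definition bounded_set2 (A : set pt) : Prop :=
  exists M : R, forall p, A p -> `|p.1| <= M /\ `|p.2| <= M.

(* interior: the points off the boundary whose component in the complement
   of the boundary is bounded (Jordan curve theorem) *)
Definition pinterior (s : seq pt) : set pt :=
  [set p | ~ boundary s p /\ bounded_set2 (connected_component (~` boundary s) p)].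

(* the polygon P as a closed region *)
Definition region (s : seq pt) : set pt := boundary s `|` pinterior s.

Definition N_edge (s : seq pt) (i : nat) : Prop :=
  horizontal (vtx s i) (vtx s i.+1) /\
  forall p, oseg (vtx s i) (vtx s i.+1) p -> exists2 e : R, 0 < e &
    forall t : R, 0 < t < e -> pinterior s (p.1, p.2 - t) /\ ~ region s (p.1, p.2 + t).
Definition S_edge (s : seq pt) (i : nat) : Prop :=
  horizontal (vtx s i) (vtx s i.+1) /\
  forall p, oseg (vtx s i) (vtx s i.+1) p -> exists2 e : R, 0 < e &
    forall t : R, 0 < t < e -> pinterior s (p.1, p.2 + t) /\ ~ region s (p.1, p.2 - t).
Definition E_edge (s : seq pt) (i : nat) : Prop :=
  vertical (vtx s i) (vtx s i.+1) /\
  forall p, oseg (vtx s i) (vtx s i.+1) p -> exists2 e : R, 0 < e &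
    forall t : R, 0 < t < e -> pinterior s (p.1 - t, p.2) /\ ~ region s (p.1 + t, p.2).
Definition W_edge (s : seq pt) (i : nat) : Prop :=
  vertical (vtx s i) (vtx s i.+1) /\
  forall p, oseg (vtx s i) (vtx s i.+1) p -> exists2 e : R, 0 < e &
    forall t : R, 0 < t < e -> pinterior s (p.1 + t, p.2) /\ ~ region s (p.1 - t, p.2).

(* vertex i is incident to edges i-1 (= i + n - 1 mod n) and i *)
Definition incident_edge (s : seq pt) (i k : nat) : Prop :=
  k = i \/ k = ((i + size s).-1 %% size s)%N.

(* reflex vertex: interior angle 270 degrees, i.e. near the vertex exactly
   three of the four open quadrants lie in the interior of P *)
Definition reflex (s : seq pt) (i : nat) : Prop :=
  exists2 e : R, 0 < e & forall t : R, 0 < t < e ->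
    let w := vtx s i in
    count (fun p => `[< pinterior s p >])
      [:: (w.1 + t, w.2 + t); (w.1 - t, w.2 + t);
          (w.1 - t, w.2 - t); (w.1 + t, w.2 - t)] = 3%N.

Definition NE_reflex (s : seq pt) (i : nat) : Prop :=
  (i < size s)%N /\ reflex s i /\
  (exists k, incident_edge s i k /\ N_edge s k) /\
  (exists k, incident_edge s i k /\ E_edge s k).
Definition NW_reflex (s : seq pt) (i : nat) : Prop :=
  (i < size s)%N /\ reflex s i /\
  (exists k, incident_edge s i k /\ N_edge s k) /\
  (exists k, incident_edge s i k /\ W_edge s k).
Definition SE_reflex (s : seq pt) (i : nat) : Prop :=
  (i < size s)%N /\ reflex s i /\
  (exists k, incident_edge s i k /\ S_edge s k) /\
  (exists k, incident_edge s i k /\ E_edge s k).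
Definition SW_reflex (s : seq pt) (i : nat) : Prop :=
  (i < size s)%N /\ reflex s i /\
  (exists k, incident_edge s i k /\ S_edge s k) /\
  (exists k, incident_edge s i k /\ W_edge s k).

Definition line_at (beta : R) (a : pt) : set pt :=
  [set p | exists r : R, p = (a.1 + r * cos beta, a.2 + r * sin beta)].

Definition beta_convex (beta : R) (C : set pt) : Prop :=
  forall a : pt, connected (C `&` line_at beta a).

(* p and q see each other w.r.t. {0,90} rotated by theta, inside P *)
Definition sees (theta : R) (P : set pt) (p q : pt) : Prop :=
  exists g : R -> pt,
    {within `[0, 1], continuous g} /\ g 0 = p /\ g 1 = q /\
    g @` `[0, 1] `<=` P /\
    beta_convex theta (g @` `[0, 1]) /\
    beta_convex (theta + pi / 2) (g @` `[0, 1]).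

Definition kernel_theta (theta : R) (P : set pt) : set pt :=
  [set p | P p /\ forall q, P q -> sees theta P p q].

End Polygon.

(* Main.v *)
Require Import Defs.
From HB Require Import structures.
From mathcomp Require Import all_boot all_order all_algebra.
From mathcomp Require Import all_classical all_reals all_analysis.
From mathcomp Require Import ring lra.
From Stdlib Require Import Lia.
From mathcomp Require Import zify.
Import Order.TTheory GRing.Theory Num.Theory.
Import numFieldNormedType.Exports.
Local Open Scope classical_set_scope.
Local Open Scope ring_scope.
Set Implicit Arguments. Unset Strict Implicit. Unset Printing Implicit Defensive.
Section Aux.
Variable R : realType.
Notation pt := (R * R)%type.

Definition mv (q : pt) (t : R) (d : pt) : pt := (q.1 + t * d.1, q.2 + t * d.2).
Definition dot (a b : pt) : R := a.1 * b.1 + a.2 * b.2.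
Definition df (w q : pt) : pt := (w.1 - q.1, w.2 - q.2).

Lemma ballE (q w : pt) d : ball q d w <-> (`|q.1 - w.1| < d /\ `|q.2 - w.2| < d).
Proof. by rewrite /ball /= /prod_ball /= -!ball_normE. Qed.

Lemma lin_continuous (q : pt) (a b : R) :
  continuous (fun z : pt => (z.1 - q.1) * a + (z.2 - q.2) * b).
Proof.
move=> z; apply: cvgD; apply: cvgMl; apply: cvgB; try exact: cvg_cst.
- exact: cvg_fst.
- exact: cvg_snd.
Qed.

Lemma line_fill (beta : R) (C : set pt) (q : pt) (t t' : R) :
  connected (C `&` line_at beta q) -> C q -> C (mv q t (cos beta, sin beta)) ->
  (0 <= t' <= t \/ t <= t' <= 0) -> C (mv q t' (cos beta, sin beta)).
Proof.
move=> cC Cq Ct ht'.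
set phi := fun z : pt => (z.1 - q.1) * cos beta + (z.2 - q.2) * sin beta.
have : connected (phi @` (C `&` line_at beta q)).
  apply: connected_continuous_connected => //.
  exact/continuous_subspaceT/lin_continuous.
move/connected_intervalP => itv.
have phimv r : phi (mv q r (cos beta, sin beta)) = r.
  rewrite /phi /mv /=. have := cos2Dsin2 beta.
  move=> h; transitivity (r * (cos beta ^+ 2 + sin beta ^+ 2)); first by ring.
  by rewrite h mulr1.
have L0 : (phi @` (C `&` line_at beta q)) 0.
  exists q; last by rewrite /phi !subrr !mul0r addr0.
  split => //; exists 0; rewrite !mul0r !addr0; exact: surjective_pairing.
have Lt : (phi @` (C `&` line_at beta q)) t.
  exists (mv q t (cos beta, sin beta)) => //; split => //; by exists t.
have [z [Cz [r zE]] phiz] : (phi @` (C `&` line_at beta q)) t'.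
  case: ht' => h; [exact: (itv 0 t L0 Lt t' h) | exact: (itv t 0 Lt L0 t' h)].
have zE' : z = mv q r (cos beta, sin beta) by [].
move: phiz; rewrite zE' phimv => <-.
by rewrite -zE'.
Qed.

End Aux.

Section Cone.
Variable R : realType.
Notation pt := (R * R)%type.

Definition adm (th : R) (d : pt) := exists sg : R, (sg = 1 \/ sg = -1) /\
  (d = (sg * cos th, sg * sin th) \/ d = (sg * - sin th, sg * cos th)).

Lemma pt_eq (a b : pt) : a.1 = b.1 -> a.2 = b.2 -> a = b.
Proof. by case: a b => ? ? [? ?] /= -> ->. Qed.

Lemma adm_unit th d : adm th d -> dot d d = 1.
Proof.
case=> sg [hs [->|->]]; rewrite /dot /=; have := cos2Dsin2 th;
  rewrite !expr2 => h; case: hs => ->; nra.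
Qed.

Lemma adm_bound th d : adm th d -> `|d.1| <= 1 /\ `|d.2| <= 1.
Proof.
case=> sg [hs [->|->]] /=; case: hs => ->;
  rewrite ?mul1r ?mulN1r ?normrN; split; by [exact: cos_max| exact: sin_max].
Qed.

Lemma ray_fill th (C : set pt) q d r r' : beta_convex th C ->
  beta_convex (th + pi / 2) C -> adm th d -> C q -> C (mv q r d) ->
  0 <= r' <= r -> C (mv q r' d).
Proof.
move=> b1 b2 [sg [hs hd]] Cq Cr hr.
case: hd => hd; subst d.
- have E x : mv q x (sg * cos th, sg * sin th) = mv q (sg * x) (cos th, sin th).
    by rewrite /mv /=; congr pair; ring.
  rewrite E; apply: (line_fill (t := sg * r) (b1 q) Cq); first by rewrite -E.
  move: hr => /andP[hr1 hr2]; case: hs => ->; [left|right]; apply/andP; split;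
    rewrite ?mul1r ?mulN1r ?lerN2 ?oppr_le0 //.
- have E x : mv q x (sg * - sin th, sg * cos th) =
      mv q (sg * x) (cos (th + pi / 2), sin (th + pi / 2)).
    by rewrite cosDpihalf sinDpihalf /mv /=; congr pair; ring.
  rewrite E; apply: (line_fill (t := sg * r) (b2 q) Cq); first by rewrite -E.
  move: hr => /andP[hr1 hr2]; case: hs => ->; [left|right]; apply/andP; split;
    rewrite ?mul1r ?mulN1r ?lerN2 ?oppr_le0 //.
Qed.

Lemma dot_df_self (q d : pt) : dot (df q q) d = 0.
Proof. by rewrite /dot /df /= !subrr !mul0r addr0. Qed.

Lemma ray_contra th (C P : set pt) q da db del w : beta_convex th C ->
  beta_convex (th + pi / 2) C -> C `<=` P -> adm th da -> dot da db = 0 ->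
  0 < del -> C q ->
  (forall z, ball q del z -> 0 < dot (df z q) da -> dot (df z q) db = 0 -> ~ P z) ->
  C w -> 0 < dot (df w q) da -> w = mv q (dot (df w q) da) da -> False.
Proof.
move=> b1 b2 CP ad dab d0 Cq hext Cw hw wE.
set r := dot (df w q) da in hw wE; set r' := Num.min r (del / 2).
have r'0 : 0 < r' by rewrite lt_min hw divr_gt0.
have r'r : r' <= r by rewrite ge_min lexx.
have r'd : r' < del by rewrite gt_min; apply/orP; right; lra.
have Cw' : C (mv q r' da).
  apply: (ray_fill (r := r) b1 b2 ad Cq); first by rewrite -wE.
  by rewrite r'r andbT ltW.
have [h1 h2] := adm_bound ad.
have u := adm_unit ad.
apply: (hext (mv q r' da)); last exact: CP.
- rewrite ballE /mv /=; split; rewrite opprD addrA subrr add0r normrN normrM (gtr0_norm r'0); nra.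
- have -> : dot (df (mv q r' da) q) da = r' * dot da da.
    by rewrite /dot /df /mv /=; ring.
  by rewrite u mulr1.
- have -> : dot (df (mv q r' da) q) db = r' * dot da db.
    by rewrite /dot /df /mv /=; ring.
  by rewrite dab mulr0.
Qed.

Definition decomp (d1 d2 : pt) := forall v : pt,
  v = (dot v d1 * d1.1 + dot v d2 * d2.1, dot v d1 * d1.2 + dot v d2 * d2.2).

Lemma decomp_eq d1 d2 (w q : pt) : decomp d1 d2 ->
  dot (df w q) d1 = 0 -> dot (df w q) d2 = 0 -> w = q.
Proof.
move=> dec h1 h2; have := dec (df w q); rewrite h1 h2 !mul0r !addr0 /df.
by case=> e1 e2; apply: pt_eq; apply/eqP; rewrite -subr_eq0 ?e1 ?e2.
Qed.

Lemma decomp_mv d1 d2 (w q : pt) : decomp d1 d2 ->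
  dot (df w q) d2 = 0 -> w = mv q (dot (df w q) d1) d1.
Proof.
move=> dec h2; have := dec (df w q); rewrite h2 !mul0r !addr0.
set r := dot _ d1; rewrite /df /mv; case=> e1 e2; apply: pt_eq => /=.
  by rewrite -e1; ring.
by rewrite -e2; ring.
Qed.

Lemma decomp_sym d1 d2 : decomp d1 d2 -> decomp d2 d1.
Proof. by move=> dec v; rewrite {1}(dec v) (addrC (_ * d1.1)) (addrC (_ * d1.2)). Qed.

Lemma open_half (q d : pt) : open [set w : pt | 0 < dot (df w q) d].
Proof.
have h1 := @open_gt R 0.
have h2 : {in (fun w : pt => dot (df w q) d) @^-1` [set x : R | 0 < x],
   continuous (fun w : pt => dot (df w q) d)}.
  move=> w _; exact: lin_continuous.
have := open_comp h2 h1.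
exact.
Qed.

Lemma closed_half (q d : pt) : closed [set w : pt | 0 <= dot (df w q) d].
Proof.
have h1 := @closed_ge R 0.
have h2 : {in ~` (fun w : pt => dot (df w q) d) @^-1` [set x : R | 0 <= x],
   continuous (fun w : pt => dot (df w q) d)}.
  move=> w _; exact: lin_continuous.
have := preimage_closed h2 h1.
exact.
Qed.

Lemma cone_contra th (C P : set pt) q p d1 d2 del :
  beta_convex th C -> beta_convex (th + pi / 2) C -> C `<=` P -> connected C ->
  adm th d1 -> adm th d2 -> dot d1 d2 = 0 -> decomp d1 d2 ->
  C q -> C p -> p <> q -> 0 <= dot (df p q) d1 -> 0 <= dot (df p q) d2 ->
  0 < del ->
  (forall w, ball q del w -> 0 <= dot (df w q) d1 -> 0 <= dot (df w q) d2 ->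
     w <> q -> ~ P w) ->
  False.
Proof.
move=> b1 b2 CP cC a1 a2 o12 dec Cq Cp pq hp1 hp2 d0 hext.
have o21 : dot d2 d1 = 0 by rewrite /dot mulrC (mulrC d2.2).
have side1 w : C w -> 0 < dot (df w q) d1 -> dot (df w q) d2 = 0 -> False.
  move=> Cw h1 h2; apply: (ray_contra b1 b2 CP a1 o12 d0 Cq _ Cw h1).
    move=> z bz z1 z2; apply: hext => //; first exact: ltW.
      by rewrite z2.
    by move=> zq; move: z1; rewrite zq dot_df_self ltxx.
  exact: decomp_mv.
have side2 w : C w -> 0 < dot (df w q) d2 -> dot (df w q) d1 = 0 -> False.
  move=> Cw h1 h2; apply: (ray_contra b1 b2 CP a2 o21 d0 Cq _ Cw h1).
    move=> z bz z1 z2; apply: hext => //; last first.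
      by move=> zq; move: z1; rewrite zq dot_df_self ltxx.
      exact: ltW.
    by rewrite z2.
  exact: (decomp_mv (decomp_sym dec)).
have pos w : C w -> 0 <= dot (df w q) d1 -> 0 <= dot (df w q) d2 -> w <> q ->
    0 < dot (df w q) d1 /\ 0 < dot (df w q) d2.
  move=> Cw; rewrite le_eqVlt => /orP[/eqP h1|h1]; rewrite le_eqVlt => /orP[/eqP h2|h2] wq.
  - by exfalso; apply: wq; apply: (decomp_eq dec).
  - by exfalso; apply: (side2 w Cw h2).
  - by exfalso; apply: (side1 w Cw h1).
  - by [].
have [p1 p2] := pos p Cp hp1 hp2 pq.
set O := [set w : pt | 0 < dot (df w q) d1] `&` [set w : pt | 0 < dot (df w q) d2].
set D := ([set w : pt | 0 <= dot (df w q) d1] `&` [set w : pt | 0 <= dot (df w q) d2])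
   `&` ~` ball q del.
have oO : open O.
  apply: openI; exact: open_half.
have cD : closed D.
  apply: closedI; last exact/open_closedC/ball_open.
  apply: closedI; exact: closed_half.
have E : C `&` O = C.
  apply: cC; first by exists p.
    by exists O.
  exists D => //; apply/seteqP; split => w [Cw Hw]; split => //.
    case: Hw => h1 h2; split; first by split; apply: ltW.
    move=> bw; apply: (hext w bw (ltW h1) (ltW h2)); last exact: CP.
    by move=> wq; move: h1 => /=; rewrite wq dot_df_self ltxx.
  case: Hw => -[h1 h2] nb.
  have wq : w <> q by move=> wq; apply: nb; rewrite wq; exact: ballxx.
  by have [] := pos w Cw h1 h2 wq; split.
have : (C `&` O) q by rewrite E.
by case=> _ [+ _] => /=; rewrite dot_df_self ltxx.
Qed.

Lemma sees_curve th (P : set pt) p q : sees th P p q ->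
  exists C : set pt, [/\ C `<=` P, C p, C q, connected C &
    beta_convex th C /\ beta_convex (th + pi / 2) C].
Proof.
case=> g [gc [g0 [g1 [gP [b1 b2]]]]]; exists (g @` `[0, 1]); split => //.
- by exists 0 => //=; rewrite in_itv /= lexx ler01.
- by exists 1 => //=; rewrite in_itv /= lexx ler01.
- apply: connected_continuous_connected => //.
  apply/connected_intervalP; exact: interval_is_interval.
Qed.

Lemma nosee th (P : set pt) q p d1 d2 n del :
  adm th d1 -> adm th d2 -> dot d1 d2 = 0 -> decomp d1 d2 ->
  P q -> p <> q -> 0 <= dot (df p q) d1 -> 0 <= dot (df p q) d2 ->
  0 < dot d1 n -> 0 < dot d2 n -> 0 < del ->
  (forall w, ball q del w -> 0 < dot (df w q) n -> ~ P w) ->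
  ~ sees th P p q.
Proof.
move=> a1 a2 o12 dec Pq pq hp1 hp2 n1 n2 d0 hext.
move=> /sees_curve [C [CP Cp Cq cC [b1 b2]]].
apply: (cone_contra b1 b2 CP cC a1 a2 o12 dec Cq Cp pq hp1 hp2 d0).
move=> w bw h1 h2 wq; apply: hext bw _.
have -> : dot (df w q) n = dot (df w q) d1 * dot d1 n + dot (df w q) d2 * dot d2 n.
  by rewrite {1}(dec (df w q)) /dot /=; ring.
move: h1 h2; rewrite le_eqVlt => /orP[/eqP h1|h1]; rewrite le_eqVlt => /orP[/eqP h2|h2].
- by exfalso; apply: wq; apply: (decomp_eq dec).
- by rewrite -h1 mul0r add0r mulr_gt0.
- by rewrite -h2 mul0r addr0 mulr_gt0.
- by rewrite addr_gt0 // mulr_gt0.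
Qed.

End Cone.

Section Poly.
Variable R : realType.
Notation pt := (R * R)%type.

Definition segf (a b : pt) (t : R) : pt :=
  (a.1 + t * (b.1 - a.1), a.2 + t * (b.2 - a.2)).

Lemma segf_continuous (a b : pt) : continuous (segf a b).
Proof.
move=> t; rewrite /segf.
have h1 : (fun t => a.1 + t * (b.1 - a.1)) @ t --> a.1 + t * (b.1 - a.1).
  apply: cvgD; first exact: cvg_cst. apply: cvgMl. exact: cvg_id.
have h2 : (fun t => a.2 + t * (b.2 - a.2)) @ t --> a.2 + t * (b.2 - a.2).
  apply: cvgD; first exact: cvg_cst. apply: cvgMl. exact: cvg_id.
have := cvg_pair h1 h2.
exact.
Qed.

Lemma segE (a b : pt) : seg a b = segf a b @` `[0, 1].
Proof.
apply/seteqP; split => p.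
  by case=> t [ht ->]; exists t => //=; rewrite in_itv /=.
by case=> t; rewrite /= in_itv /= => ht <-; exists t.
Qed.

Lemma seg_connected (a b : pt) : connected (seg a b).
Proof.
rewrite segE; apply: connected_continuous_connected.
  apply/connected_intervalP; exact: interval_is_interval.
exact/continuous_subspaceT/segf_continuous.
Qed.

Lemma seg_closed (a b : pt) : closed (seg a b).
Proof.
rewrite segE; apply: compact_closed; first exact: norm_hausdorff.
apply: continuous_compact; last exact: segment_compact.
exact/continuous_subspaceT/segf_continuous.
Qed.

Lemma avoid1 (a b q : pt) : ~ seg a b q ->
  exists2 d, 0 < d & forall w, ball q d w -> ~ seg a b w.
Proof.
move=> nq; have := closed_openC (@seg_closed a b); rewrite openE => /(_ q nq).
by move=> /nbhs_ballP [d /= d0 hd]; exists d => // w /hd.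
Qed.

Lemma seg_sym (a b : pt) : seg a b = seg b a.
Proof.
apply/seteqP; split => p [t [/andP[t0 t1] ->]]; exists (1 - t);
  (split; first by apply/andP; split; lra); congr pair; ring.
Qed.

Lemma oseg_sym (a b : pt) : oseg a b = oseg b a.
Proof.
apply/seteqP; split => p [t [/andP[t0 t1] ->]]; exists (1 - t);
  (split; first by apply/andP; split; lra); congr pair; ring.
Qed.

Lemma oseg_seg (a b : pt) : oseg a b `<=` seg a b.
Proof. by move=> p [t [/andP[t0 t1] ->]]; exists t; split => //; rewrite ltW ?ltW. Qed.

Lemma seg_a (a b : pt) : seg a b a.
Proof. exists 0; rewrite lexx ler01 !mul0r !addr0; split => //; exact: surjective_pairing. Qed.

Lemma seg_b (a b : pt) : seg a b b.
Proof.
exists 1; rewrite lexx ler01 !mul1r; split => //.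
by apply: pt_eq => /=; ring.
Qed.

Lemma oseg_neq (a b q : pt) : a <> b -> oseg a b q -> q <> a /\ q <> b.
Proof.
move=> ab [t [/andP[t0 t1] qE]]; split => qa; apply: ab; rewrite qa in qE;
  apply: pt_eq; have /= e1 := congr1 fst qE; have /= e2 := congr1 snd qE.
-   have /eqP : t * (b.1 - a.1) = 0 by lra.
  by rewrite mulf_eq0 => /orP[/eqP|]; [lra|rewrite subr_eq0 => /eqP ->].
-   have /eqP : t * (b.2 - a.2) = 0 by lra.
  by rewrite mulf_eq0 => /orP[/eqP|]; [lra|rewrite subr_eq0 => /eqP ->].
-   have /eqP : (1 - t) * (b.1 - a.1) = 0 by lra.
  by rewrite mulf_eq0 => /orP[/eqP|]; [lra|rewrite subr_eq0 => /eqP ->].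
-   have /eqP : (1 - t) * (b.2 - a.2) = 0 by lra.
  by rewrite mulf_eq0 => /orP[/eqP|]; [lra|rewrite subr_eq0 => /eqP ->].
Qed.

End Poly.

Section Poly2.
Variable R : realType.
Notation pt := (R * R)%type.

Definition prv (s : seq pt) (i : nat) : nat := ((i + size s).-1 %% size s)%N.

Lemma vtx_mod (s : seq pt) i : vtx s (i %% size s) = vtx s i.
Proof. by rewrite /vtx modn_mod. Qed.

Lemma vtx_prvS (s : seq pt) i : (0 < size s)%N -> vtx s (prv s i).+1 = vtx s i.
Proof.
move=> n0; rewrite /vtx /prv; congr nth.
rewrite -addn1 modnDml addn1 prednK ?modnDr //.
by rewrite addn_gt0 n0 orbT.
Qed.

Lemma prv_lt (s : seq pt) i : (0 < size s)%N -> (prv s i < size s)%N.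
Proof. by move=> n0; rewrite /prv ltn_pmod. Qed.

Lemma prv_of_succ (s : seq pt) j : (j < size s)%N -> prv s (j.+1 %% size s) = j.
Proof.
move=> hj; rewrite /prv; case: (ltnP j.+1 (size s)) => h.
  rewrite (modn_small h) addSn /= modnDr modn_small //.
have -> : j.+1 = size s by lia.
rewrite modnn add0n modn_small; lia.
Qed.

Lemma edge_nondeg (s : seq pt) k : orthogonal_polygon s -> (k < size s)%N ->
  vtx s k <> vtx s k.+1.
Proof.
case=> _ /[apply] -[[h _]|[h _]] E; move: h;
  rewrite /horizontal /vertical E; by case.
Qed.

Lemma vtx_in_edge (s : seq pt) i : edge s i (vtx s i).
Proof. exact: seg_a. Qed.

Lemma vtxS_in_edge (s : seq pt) i : edge s i (vtx s i.+1).
Proof. exact: seg_b. Qed.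

Lemma inter1 (A B : set pt) (x z : pt) : A `&` B = [set x] -> A z -> B z -> z = x.
Proof. by move=> E Az Bz; have : (A `&` B) z by []; rewrite E. Qed.

Lemma inter0 (A B : set pt) (z : pt) : A `&` B = set0 -> A z -> B z -> False.
Proof. by move=> E Az Bz; have : (A `&` B) z by []; rewrite E. Qed.

Lemma edge_avoid (s : seq pt) k q j : simple_polygon s -> orthogonal_polygon s ->
  (k < size s)%N -> (j < size s)%N -> j <> k ->
  oseg (vtx s k) (vtx s k.+1) q -> ~ edge s j q.
Proof.
move=> sp op hk hj jk oq ej.
have nd := edge_nondeg op hk; have [qa qb] := oseg_neq nd oq.
have ek : edge s k q := oseg_seg oq.
case: (eqVneq j (k.+1 %% size s)%N) => [jE|jn].
  by apply: qb; apply: (inter1 ((sp k j hk hj (nesym jk)).1 jE) ek ej).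
case: (eqVneq k (j.+1 %% size s)%N) => [kE|kn].
  apply: qa; rewrite (inter1 ((sp j k hj hk jk).1 kE) ej ek) -vtx_mod -kE.
  by [].
apply: (inter0 ((sp k j hk hj (nesym jk)).2 (elimN eqP jn) (elimN eqP kn)) ek ej).
Qed.

Lemma vertex_avoid (s : seq pt) i j : simple_polygon s -> orthogonal_polygon s ->
  (i < size s)%N -> (j < size s)%N -> j <> i -> j <> prv s i ->
  ~ edge s j (vtx s i).
Proof.
move=> sp op hi hj ji jp ej.
have ei := vtx_in_edge s i.
case: (eqVneq j (i.+1 %% size s)%N) => [jE|jn].
  by apply: (edge_nondeg op hi); apply: (inter1 ((sp i j hi hj (nesym ji)).1 jE) ei ej).
case: (eqVneq i (j.+1 %% size s)%N) => [iE|iN].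
  by apply: jp; rewrite iE prv_of_succ.
apply: (inter0 ((sp i j hi hj (nesym ji)).2 (elimN eqP jn) (elimN eqP iN)) ei ej).
Qed.

Lemma ball_minl (q w : pt) d1 d2 : ball q (Num.min d1 d2) w -> ball q d1 w.
Proof. by apply: le_ball; rewrite ge_min lexx. Qed.
Lemma ball_minr (q w : pt) d1 d2 : ball q (Num.min d1 d2) w -> ball q d2 w.
Proof. by apply: le_ball; rewrite ge_min lexx orbT. Qed.

Lemma avoid_fin (s : seq pt) (K : pred nat) (q : pt) m :
  (forall j, (j < m)%N -> ~~ K j -> ~ edge s j q) ->
  exists2 d, 0 < d & forall w, ball q d w ->
    forall j, (j < m)%N -> ~~ K j -> ~ edge s j w.
Proof.
elim: m => [|m IH] h.
  by exists 1 => // w _ j; rewrite ltn0.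
have [d1 d10 h1] : exists2 d, 0 < d & forall w, ball q d w ->
    forall j, (j < m)%N -> ~~ K j -> ~ edge s j w.
  by apply: IH => j hj; apply: h; rewrite ltnS ltnW.
case Km: (K m).
  exists d1 => // w bw j; rewrite ltnS leq_eqVlt => /orP[/eqP jm|hj].
    by rewrite jm Km.
  exact: h1.
have [d2 d20 h2] := avoid1 (h m (ltnSn m) (negbT Km)).
exists (Num.min d1 d2); first by rewrite lt_min d10 d20.
move=> w bw j; rewrite ltnS leq_eqVlt => /orP[/eqP jm|hj] Kj.
  rewrite jm; exact: h2 (ball_minr bw).
exact: (h1 w (ball_minl bw) j hj Kj).
Qed.

End Poly2.

Section Poly3.
Variable R : realType.
Notation pt := (R * R)%type.

Lemma comp_ext (s : seq pt) (S : set pt) w0 w : S `<=` ~` boundary s ->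
  connected S -> S w0 -> S w -> ~ region s w0 -> ~ region s w.
Proof.
move=> Sb cS S0 Sw nr0 [bw|[nbw bd]]; first exact: (Sb w Sw).
apply: nr0; right; split; first exact: Sb.
have cc : connected_component (~` boundary s) w0 w by exists S.
by rewrite (same_connected_component cc).
Qed.

Definition hbox (q : pt) (d : R) (n : pt) :=
  [set z : pt | ball q d z /\ 0 < dot (df z q) n].

Lemma conv_abs (x y t d : R) : `|x| < d -> `|y| < d -> 0 <= t <= 1 ->
  `|x + t * (y - x)| < d.
Proof.
rewrite !ltr_norml => /andP[x1 x2] /andP[y1 y2] /andP[t0 t1].
by case: (lerP x y) => h; apply/andP; split; nra.
Qed.

Lemma conv_pos (x y t : R) : 0 < x -> 0 < y -> 0 <= t <= 1 -> 0 < x + t * (y - x).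
Proof. by move=> x0 y0 /andP[t0 t1]; case: (lerP x y) => h; nra. Qed.

Lemma hbox_convex q d n (a b : pt) : hbox q d n a -> hbox q d n b ->
  seg a b `<=` hbox q d n.
Proof.
move=> [ba pa] [bb pb] z [t [ht ->]]; move: ba bb; rewrite !ballE /= => -[ba1 ba2] [bb1 bb2].
split; first (rewrite ballE /=; split).
- have -> : q.1 - (a.1 + t * (b.1 - a.1)) = (q.1 - a.1) + t * ((q.1 - b.1) - (q.1 - a.1)).
    by ring.
  exact: conv_abs.
- have -> : q.2 - (a.2 + t * (b.2 - a.2)) = (q.2 - a.2) + t * ((q.2 - b.2) - (q.2 - a.2)).
    by ring.
  exact: conv_abs.
have -> : dot (df (a.1 + t * (b.1 - a.1), a.2 + t * (b.2 - a.2)) q) n =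
   dot (df a q) n + t * (dot (df b q) n - dot (df a q) n).
  by rewrite /dot /df /=; ring.
exact: conv_pos.
Qed.

Lemma edge_ext (s : seq pt) k (q n : pt) : simple_orthogonal_polygon s ->
  (k < size s)%N -> oseg (vtx s k) (vtx s k.+1) q ->
  (forall z, edge s k z -> dot (df z q) n = 0) -> dot n n = 1 ->
  `|n.1| <= 1 -> `|n.2| <= 1 ->
  (exists2 e, 0 < e & forall t, 0 < t < e -> ~ region s (mv q t n)) ->
  exists2 d, 0 < d & forall w, hbox q d n w -> ~ region s w.
Proof.
move=> [op sp] hk oq hn nn n1 n2 [e e0 he].
have [d d0 hd] : exists2 d, 0 < d & forall w, ball q d w ->
    forall j, (j < size s)%N -> ~~ (pred1 k) j -> ~ edge s j w.
  apply: avoid_fin => j hj /eqP jk.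
  exact: (edge_avoid sp op hk hj jk oq).
exists d => // w hw.
set t := Num.min e d / 2.
have t0 : 0 < t by rewrite divr_gt0 // lt_min e0 d0.
have te : t < e.
  have : Num.min e d <= e by rewrite ge_min lexx.
  rewrite /t; lra.
have td : t < d.
  have : Num.min e d <= d by rewrite ge_min lexx orbT.
  rewrite /t; lra.
have h0 : hbox q d n (mv q t n).
  split.
    rewrite ballE /mv /=; split;
      rewrite opprD addrA subrr add0r normrN normrM (gtr0_norm t0); nra.
  have -> : dot (df (mv q t n) q) n = t * dot n n by rewrite /dot /df /mv /=; ring.
  by rewrite nn mulr1.
apply: (@comp_ext s (seg (mv q t n) w) (mv q t n)).
- move=> z /(hbox_convex h0 hw) [bz pz] [j [hj ej]].
  case: (eqVneq j k) => [jk|jk].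
    by move: pz; rewrite jk in ej; rewrite (hn z ej) ltxx.
  exact: (hd z bz j hj jk ej).
- exact: seg_connected.
- exact: seg_a.
- exact: seg_b.
- by apply: he; rewrite t0 te.
Qed.

Lemma vert_ext (s : seq pt) i (n : pt) kh oh kv ov : simple_orthogonal_polygon s ->
  (i < size s)%N -> edge s kh = seg (vtx s i) oh -> edge s kv = seg (vtx s i) ov ->
  (forall j, j = i \/ j = prv s i -> j = kh \/ j = kv) ->
  (forall z, seg (vtx s i) oh z -> dot (df z (vtx s i)) n <= 0) ->
  (forall z, seg (vtx s i) ov z -> dot (df z (vtx s i)) n <= 0) ->
  (forall d, 0 < d -> exists z0, hbox (vtx s i) d n z0 /\ ~ region s z0) ->
  exists2 d, 0 < d & forall z, hbox (vtx s i) d n z -> ~ region s z.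
Proof.
move=> [op sp] hi eh ev hK hh hv hz0.
have [d d0 hd] : exists2 d, 0 < d & forall w, ball (vtx s i) d w ->
    forall j, (j < size s)%N -> ~~ ((j == i) || (j == prv s i)) -> ~ edge s j w.
  apply: avoid_fin => j hj; rewrite negb_or => /andP[/eqP ji /eqP jp].
  exact: (vertex_avoid sp op hi hj ji jp).
exists d => // z hz.
have [z0 [h0 nr0]] := hz0 d d0.
apply: (@comp_ext s (seg z0 z) z0) => //.
- move=> y /(hbox_convex h0 hz) [by_ py] [j [hj ej]].
  case Kj: ((j == i) || (j == prv s i)).
    have : j = i \/ j = prv s i by move: Kj => /orP[/eqP|/eqP]; [left|right].
    move=> /hK [jE|jE]; rewrite jE in ej.
      by rewrite eh in ej; have := hh y ej; lra.
    by rewrite ev in ej; have := hv y ej; lra.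
  exact: (hd y by_ j hj (negbT Kj)).
- exact: seg_connected.
- exact: seg_a.
- exact: seg_b.
Qed.

End Poly3.

Section Info.
Variable R : realType.
Notation pt := (R * R)%type.

Definition einfo (s : seq pt) i k (o n : pt) :=
  [/\ (k < size s)%N, k = i \/ k = prv s i, edge s k = seg (vtx s i) o,
      oseg (vtx s k) (vtx s k.+1) = oseg (vtx s i) o &
      forall z, oseg (vtx s i) o z -> exists2 e, 0 < e &
        forall t, 0 < t < e -> ~ region s (mv z t n)].

Lemma orient (s : seq pt) i k : (4 <= size s)%N -> (i < size s)%N ->
  incident_edge s i k ->
  [/\ (k < size s)%N, k = i \/ k = prv s i &
   exists o, (vtx s k = vtx s i /\ vtx s k.+1 = o) \/
             (vtx s k = o /\ vtx s k.+1 = vtx s i)].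
Proof.
move=> n4 hi [-> | ->].
  by split; [|left|exists (vtx s i.+1); left].
have n0 : (0 < size s)%N by lia.
split; [exact: prv_lt|by right|].
by exists (vtx s (prv s i)); right; split => //; rewrite vtx_prvS.
Qed.

Lemma einfo_of (s : seq pt) i k (n : pt) : (4 <= size s)%N -> (i < size s)%N ->
  incident_edge s i k ->
  (forall p, oseg (vtx s k) (vtx s k.+1) p -> exists2 e, 0 < e &
     forall t, 0 < t < e -> ~ region s (mv p t n)) ->
  exists o, einfo s i k o n /\ ((vtx s k = vtx s i /\ vtx s k.+1 = o) \/
             (vtx s k = o /\ vtx s k.+1 = vtx s i)).
Proof.
move=> n4 hi hinc hext; case: (orient n4 hi hinc) => hk hki [x0 ho].
exists x0; split => //.
have [E1 E2] : edge s k = seg (vtx s i) x0 /\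
    oseg (vtx s k) (vtx s k.+1) = oseg (vtx s i) x0.
  rewrite /edge; case: ho => -[-> ->] //.
  by rewrite seg_sym oseg_sym.
split => // z; rewrite -E2; exact: hext.
Qed.

Lemma N_ext (s : seq pt) k : N_edge s k ->
  forall p, oseg (vtx s k) (vtx s k.+1) p -> exists2 e, 0 < e &
     forall t, 0 < t < e -> ~ region s (mv p t (0, 1)).
Proof.
case=> _ h p /h [e e0 he]; exists e => // t /he [_ +].
by rewrite /mv /= mulr0 addr0 mulr1.
Qed.

Lemma S_ext (s : seq pt) k : S_edge s k ->
  forall p, oseg (vtx s k) (vtx s k.+1) p -> exists2 e, 0 < e &
     forall t, 0 < t < e -> ~ region s (mv p t (0, -1)).
Proof.
case=> _ h p /h [e e0 he]; exists e => // t /he [_ +].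
by rewrite /mv /= mulr0 addr0 mulrN1.
Qed.

Lemma E_ext (s : seq pt) k : E_edge s k ->
  forall p, oseg (vtx s k) (vtx s k.+1) p -> exists2 e, 0 < e &
     forall t, 0 < t < e -> ~ region s (mv p t (1, 0)).
Proof.
case=> _ h p /h [e e0 he]; exists e => // t /he [_ +].
by rewrite /mv /= mulr0 addr0 mulr1.
Qed.

Lemma W_ext (s : seq pt) k : W_edge s k ->
  forall p, oseg (vtx s k) (vtx s k.+1) p -> exists2 e, 0 < e &
     forall t, 0 < t < e -> ~ region s (mv p t (-1, 0)).
Proof.
case=> _ h p /h [e e0 he]; exists e => // t /he [_ +].
by rewrite /mv /= mulr0 addr0 mulrN1.
Qed.

Lemma hor_orient (s : seq pt) k i o : horizontal (vtx s k) (vtx s k.+1) ->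
  ((vtx s k = vtx s i /\ vtx s k.+1 = o) \/ (vtx s k = o /\ vtx s k.+1 = vtx s i)) ->
  (vtx s i).2 = o.2 /\ (vtx s i).1 <> o.1.
Proof.
by move=> [h1 h2] [[E1 E2]|[E1 E2]]; rewrite E1 E2 in h1 h2; split => // /esym.
Qed.

Lemma ver_orient (s : seq pt) k i o : vertical (vtx s k) (vtx s k.+1) ->
  ((vtx s k = vtx s i /\ vtx s k.+1 = o) \/ (vtx s k = o /\ vtx s k.+1 = vtx s i)) ->
  (vtx s i).1 = o.1 /\ (vtx s i).2 <> o.2.
Proof.
by move=> [h1 h2] [[E1 E2]|[E1 E2]]; rewrite E1 E2 in h1 h2; split => // /esym.
Qed.

Lemma small_lambda (D B : R) : 0 <= D -> 0 < B ->
  exists l : R, [/\ 0 < l, l < 1 & l * D <= B].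
Proof.
move=> D0 B0; exists (Num.min (1/2) (B / (D + 1))).
have D1 : 0 < D + 1 by lra.
have l0 : 0 < Num.min (1/2) (B / (D + 1)) by rewrite lt_min; apply/andP; split; [lra | exact: divr_gt0].
have l1 : Num.min (1/2) (B / (D + 1)) <= 1/2 by rewrite ge_min lexx.
have l2 : Num.min (1/2) (B / (D + 1)) <= B / (D + 1) by rewrite ge_min lexx orbT.
split => //; first lra.
have : Num.min (1/2) (B / (D + 1)) * (D + 1) <= B.
  by rewrite -ler_pdivlMr.
nra.
Qed.

Lemma segf_oseg (a b : pt) l : 0 < l < 1 -> oseg a b (segf a b l).
Proof. by move=> hl; exists l. Qed.

Lemma two_edges_distinct (s : seq pt) i kh oh kv ov :
  edge s kh = seg (vtx s i) oh -> edge s kv = seg (vtx s i) ov ->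
  (vtx s i).1 <> oh.1 -> (vtx s i).1 = ov.1 -> kh <> kv.
Proof.
move=> eh ev h1 h2 E; have : seg (vtx s i) ov oh by rewrite -ev -E eh; exact: seg_b.
case=> t [_ /(congr1 fst) /= e]; apply: h1; rewrite e -h2 subrr mulr0 addr0 //.
Qed.

Lemma pigeon (i p kh kv j : nat) : kh <> kv -> (kh = i \/ kh = p) ->
  (kv = i \/ kv = p) -> (j = i \/ j = p) -> j = kh \/ j = kv.
Proof.
move=> ne; case=> E1; case=> E2; case=> E3; subst;
  try (by left); try (by right); by exfalso; apply: ne.
Qed.

Lemma ball_shift (w : pt) a b d : `|a| < d -> `|b| < d -> ball w d (w.1 + a, w.2 + b).
Proof. by move=> ha hb; rewrite ballE /= !opprD !addrA !subrr !add0r !normrN. Qed.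

Lemma dot_shift (w : pt) a b tau : dot (df (w.1 + a, w.2 + b) w) (0, tau) = b * tau.
Proof. by rewrite /dot /df /=; ring. Qed.

Lemma vdir (s : seq pt) i kh oh kv ov tau rho :
  simple_orthogonal_polygon s -> (i < size s)%N -> reflex s i ->
  (tau = 1 \/ tau = -1) ->
  einfo s i kh oh (0, tau) -> (vtx s i).2 = oh.2 -> (vtx s i).1 <> oh.1 ->
  einfo s i kv ov (rho, 0) -> (vtx s i).1 = ov.1 -> (vtx s i).2 <> ov.2 ->
  0 < tau * (ov.2 - (vtx s i).2).
Proof.
move=> hs hi [er er0 hr] htau [hkh hih eh oh_ exth] h2 h1 [hkv hiv ev ov_ extv] v1 v2.
set w := vtx s i in h2 h1 v1 v2 eh ev oh_ ov_ exth extv *.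
have ne := two_edges_distinct eh ev h1 v1.
have K j : j = i \/ j = prv s i -> j = kh \/ j = kv by apply: pigeon.
rewrite ltNge; apply/negP => hle.
have hlt : tau * (ov.2 - w.2) < 0.
  rewrite lt_neqAle hle andbT; apply/eqP => /eqP; rewrite mulf_eq0 subr_eq0.
  case/orP => /eqP h; [by move: htau; rewrite h; lra | by apply: v2].
have [d' d'0 hd'] : exists2 d, 0 < d & forall z, hbox w d (0, tau) z -> ~ region s z.
  apply: (vert_ext hs hi eh ev K).
  - move=> z [t [/andP[t0 t1] ->]]; rewrite /dot /df /= -h2; nra.
  - move=> z [t [/andP[t0 t1] ->]]; rewrite /dot /df /= -v1; nra.
  - move=> d d0.
    have d2 : 0 < d / 2 by lra.
    have [l [l0 l1 lD]] := small_lambda (normr_ge0 (oh.1 - w.1)) d2.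
    have oq : oseg w oh (segf w oh l) by apply: segf_oseg; rewrite l0 l1.
    have [e e0 he] := exth _ oq.
    set t := Num.min e d / 2.
    have t0 : 0 < t by rewrite divr_gt0 // lt_min e0 d0.
    have te : t < e.
      have : Num.min e d <= e by rewrite ge_min lexx.
      rewrite /t; lra.
    have td : t < d.
      have : Num.min e d <= d by rewrite ge_min lexx orbT.
      rewrite /t; lra.
    exists (mv (segf w oh l) t (0, tau)); split; last by apply: he; rewrite t0 te.
    split.
      rewrite ballE; split.
        have -> : w.1 - (mv (segf w oh l) t (0, tau)).1 = - (l * (oh.1 - w.1)).
          by rewrite /mv /segf /=; ring.
        by rewrite normrN normrM (gtr0_norm l0); lra.
      have -> : w.2 - (mv (segf w oh l) t (0, tau)).2 = - (t * tau).
        by rewrite /mv /segf /= -h2; ring.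
      rewrite normrN normrM (gtr0_norm t0).
      by case: htau => ->; rewrite ?normrN normr1; lra.
    have -> : dot (df (mv (segf w oh l) t (0, tau)) w) (0, tau) = t * (tau * tau).
      by rewrite /dot /df /mv /segf /= -h2; ring.
    by case: htau => ->; nra.
have mt : 0 < Num.min er d' / 2 by rewrite divr_gt0 // lt_min er0 d'0.
have me : Num.min er d' / 2 < er.
  have : Num.min er d' <= er by rewrite ge_min lexx.
  lra.
have md : Num.min er d' / 2 < d'.
  have : Num.min er d' <= d' by rewrite ge_min lexx orbT.
  lra.
set t := Num.min er d' / 2 in mt me md.
have ht : 0 < t < er by rewrite mt me.
have H : count (fun p => `[< pinterior s p >])
    [:: (w.1 + t, w.2 + t); (w.1 - t, w.2 + t); (w.1 - t, w.2 - t);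
        (w.1 + t, w.2 - t)] = 3%N := hr t ht.
have NP (a b : R) : `|a| < d' -> `|b| < d' -> 0 < b * tau ->
    ~ pinterior s (w.1 + a, w.2 + b).
  move=> ha hb hp pz; apply: (hd' (w.1 + a, w.2 + b)); last by right.
  split; first exact: ball_shift.
  by rewrite dot_shift.
have tn : `|t| < d' by rewrite gtr0_norm.
have tn' : `|- t| < d' by rewrite normrN gtr0_norm.
case: htau => htau; rewrite htau in NP.
  have n1 := NP t t tn tn ltac:(rewrite mulr1 //).
  have n2 := NP (- t) t tn' tn ltac:(rewrite mulr1 //).
  by move: H; rewrite /= (asboolF n1) (asboolF n2); case: (`[< _ >]); case: (`[< _ >]).
have n3 := NP (- t) (- t) tn' tn' ltac:(rewrite mulrN1 opprK //).
have n4 := NP t (- t) tn tn' ltac:(rewrite mulrN1 opprK //).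
by move: H; rewrite /= (asboolF n3) (asboolF n4); case: (`[< _ >]); case: (`[< _ >]).
Qed.

End Info.

Section Excl.
Variable R : realType.
Notation pt := (R * R)%type.

Definition neg (d : pt) : pt := (- d.1, - d.2).

Lemma adm_neg th (d : pt) : adm th d -> adm th (neg d).
Proof.
case=> sg [hs hd]; exists (- sg); split.
  by case: hs => ->; [right|left; rewrite opprK].
by case: hd => ->; [left|right]; rewrite /neg /=; congr pair; ring.
Qed.

Lemma decomp_neg (m m' : pt) : decomp m m' -> decomp m (neg m').
Proof. by move=> dec v; rewrite {1}(dec v); congr pair; rewrite /dot /neg /=; ring. Qed.

Lemma prod_le (l x y : R) : 0 < l -> `|y| <= 1 -> l * x * y <= l * `|x|.
Proof.
move=> l0; rewrite ler_norml => /andP[y1 y2].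
case: (ger0P x) => hx.
  by have := mulr_ge0 (ltW l0) hx; nra.
have : l * x < 0 by rewrite pmulr_rlt0.
nra.
Qed.

Lemma vexcl (s : seq pt) i kh oh kv ov tau rho th (m m' p : pt) :
  simple_orthogonal_polygon s -> (i < size s)%N ->
  (tau = 1 \/ tau = -1) -> (rho = 1 \/ rho = -1) ->
  einfo s i kh oh (0, tau) -> (vtx s i).2 = oh.2 ->
  einfo s i kv ov (rho, 0) -> (vtx s i).1 = ov.1 ->
  0 < tau * (ov.2 - (vtx s i).2) ->
  adm th m -> adm th m' -> dot m m' = 0 -> decomp m m' ->
  0 < dot m (0, tau) -> 0 < dot m (rho, 0) -> 0 < dot m' (0, tau) ->
  dot m' (rho, 0) < 0 ->
  region s p -> (forall q, region s q -> sees th (region s) p q) ->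
  dot (df p (vtx s i)) m <= 0.
Proof.
move=> hs hi htau hrho [hkh hih eh oh_ exth] h2 [hkv hiv ev ov_ extv] v1 vpos
  am am' o dec mh mv m'h m'v Pp hk.
set w := vtx s i in h2 v1 vpos eh ev oh_ ov_ exth extv *.
rewrite leNgt; apply/negP => a0.
have [bm1 bm2] := adm_bound am; have [bm1' bm2'] := adm_bound am'.
set a := dot (df p w) m in a0; set b := dot (df p w) m'.
have neq q : 0 < dot (df p q) m -> p <> q.
  by move=> h pq; move: h; rewrite pq dot_df_self ltxx.
case: (lerP b 0) => hb.
- have a2 : 0 < a / 2 by lra.
  have [l [l0 l1 lD]] := small_lambda (normr_ge0 (ov.2 - w.2)) a2.
  set q := segf w ov l.
  have oq : oseg w ov q by apply: segf_oseg; rewrite l0 l1.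
  have Pq : region s q.
    by left; exists kv; split => //; rewrite ev; exact: oseg_seg.
  have [d d0 hd] : exists2 d, 0 < d & forall z, hbox q d (rho, 0) z -> ~ region s z.
    apply: (edge_ext hs hkv); first by rewrite ov_.
    - move=> z; rewrite ev => -[t [_ ->]]; rewrite /dot /df /q /segf /= -v1; ring.
    - by rewrite /dot /=; case: hrho => ->; ring.
    - by case: hrho => ->; rewrite /= ?normrN normr1.
    - by rewrite /= normr0 ler01.
    - exact: extv.
  have key1 : dot (df p q) m = a - l * (ov.2 - w.2) * m.2.
    by rewrite /a /dot /df /q /segf /= -v1; ring.
  have key2 : dot (df p q) (neg m') = - b + l * (ov.2 - w.2) * m'.2.
    by rewrite /b /dot /df /q /segf /neg /= -v1; ring.
  have k1 : l * (ov.2 - w.2) * m.2 <= a / 2.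
    by apply: le_trans (prod_le _ l0 bm2) _; lra.
  have k2 : 0 < (ov.2 - w.2) * m'.2.
    by move: vpos m'h; rewrite /dot /=; case: htau => ->; nra.
  have p1 : 0 < dot (df p q) m by rewrite key1; lra.
  apply: (nosee (d1 := m) (d2 := neg m') (n := (rho, 0)) (del := d) am
      (adm_neg am') _ (decomp_neg dec) Pq (neq q p1) (ltW p1) _ mv _ d0 _ (hk q Pq)).
  + by move: o; rewrite /dot /neg /=; lra.
  + by rewrite key2; nra.
  + by move: m'v; rewrite /dot /neg /=; lra.
  + by move=> z bz pz; apply: hd.
- have ab : 0 < Num.min a b / 2 by rewrite divr_gt0 // lt_min a0 hb.
  have [l [l0 l1 lD]] := small_lambda (normr_ge0 (oh.1 - w.1)) ab.
  have ma : Num.min a b <= a by rewrite ge_min lexx.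
  have mb : Num.min a b <= b by rewrite ge_min lexx orbT.
  set q := segf w oh l.
  have oq : oseg w oh q by apply: segf_oseg; rewrite l0 l1.
  have Pq : region s q.
    by left; exists kh; split => //; rewrite eh; exact: oseg_seg.
  have [d d0 hd] : exists2 d, 0 < d & forall z, hbox q d (0, tau) z -> ~ region s z.
    apply: (edge_ext hs hkh); first by rewrite oh_.
    - move=> z; rewrite eh => -[t [_ ->]]; rewrite /dot /df /q /segf /= -h2; ring.
    - by rewrite /dot /=; case: htau => ->; ring.
    - by rewrite /= normr0 ler01.
    - by case: htau => ->; rewrite /= ?normrN normr1.
    - exact: exth.
  have key1 : dot (df p q) m = a - l * (oh.1 - w.1) * m.1.
    by rewrite /a /dot /df /q /segf /= -h2; ring.
  have key2 : dot (df p q) m' = b - l * (oh.1 - w.1) * m'.1.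
    by rewrite /b /dot /df /q /segf /= -h2; ring.
  have k1 : l * (oh.1 - w.1) * m.1 <= Num.min a b / 2.
    by apply: le_trans (prod_le _ l0 bm1) _; lra.
  have k2 : l * (oh.1 - w.1) * m'.1 <= Num.min a b / 2.
    by apply: le_trans (prod_le _ l0 bm1') _; lra.
  have p1 : 0 < dot (df p q) m by rewrite key1; lra.
  apply: (nosee (d1 := m) (d2 := m') (n := (0, tau)) (del := d) am am' o dec
      Pq (neq q p1) (ltW p1) _ mh m'h d0 _ (hk q Pq)).
  + by rewrite key2; lra.
  + by move=> z bz pz; apply: hd.
Qed.

End Excl.

Section Main.
Variable R : realType.
Notation pt := (R * R)%type.

Definition ext_on (s : seq pt) k (n : pt) := forall p, oseg (vtx s k) (vtx s k.+1) p ->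
  exists2 e, 0 < e & forall t, 0 < t < e -> ~ region s (mv p t n).

Lemma vertex_main (s : seq pt) i tau rho th (m m' : pt) :
  simple_orthogonal_polygon s -> (i < size s)%N -> reflex s i ->
  (tau = 1 \/ tau = -1) -> (rho = 1 \/ rho = -1) ->
  (exists k, incident_edge s i k /\ horizontal (vtx s k) (vtx s k.+1) /\ ext_on s k (0, tau)) ->
  (exists k, incident_edge s i k /\ vertical (vtx s k) (vtx s k.+1) /\ ext_on s k (rho, 0)) ->
  adm th m -> adm th m' -> dot m m' = 0 -> decomp m m' ->
  0 < dot m (0, tau) -> 0 < dot m (rho, 0) -> 0 < dot m' (0, tau) ->
  dot m' (rho, 0) < 0 ->
  (forall p, region s p -> (forall q, region s q -> sees th (region s) p q) ->
     dot (df p (vtx s i)) m <= 0) /\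
  exists kh oh kv ov, (kv < size s)%N /\ edge s kh = seg (vtx s i) oh /\
     (vtx s i).2 = oh.2 /\ edge s kv = seg (vtx s i) ov /\
     (vtx s i).1 = ov.1 /\ 0 < tau * (ov.2 - (vtx s i).2) /\
     (forall j, j = i \/ j = prv s i -> j = kh \/ j = kv).
Proof.
move=> hs hi hr htau hrho [kh [inch [horh exh]]] [kv [incv [verv exv]]]
  am am' o dec c1 c2 c3 c4.
have n4 : (4 <= size s)%N by case: hs => -[].
have [oh [ih orh]] := einfo_of n4 hi inch exh.
have [ov [iv orv]] := einfo_of n4 hi incv exv.
have [h2 h1] := hor_orient horh orh.
have [v1 v2] := ver_orient verv orv.
have vp := vdir hs hi hr htau ih h2 h1 iv v1 v2.
split.
  by move=> p Pp Kp; apply: (vexcl hs hi htau hrho ih h2 iv v1 vp am am' o dec).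
case: ih => hkh hih eh _ _; case: iv => hkv hiv ev _ _.
exists kh, oh, kv, ov; do 6 (split => //).
have ne := two_edges_distinct eh ev h1 v1.
by move=> j; apply: pigeon.
Qed.

Lemma coincide (s : seq pt) u kh oh kv ov k' ov' :
  simple_orthogonal_polygon s -> (u < size s)%N -> edge s kh = seg (vtx s u) oh ->
  (vtx s u).2 = oh.2 -> edge s kv = seg (vtx s u) ov ->
  0 < ov.2 - (vtx s u).2 ->
  (forall j, j = u \/ j = prv s u -> j = kh \/ j = kv) ->
  (k' < size s)%N -> edge s k' = seg (vtx s u) ov' -> ov'.2 < (vtx s u).2 -> False.
Proof.
move=> [op sp] hu eh h2 ev vpos K hk' ek' neg'.
have ej : edge s k' (vtx s u) by rewrite ek'; exact: seg_a.
have : k' = u \/ k' = prv s u.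
  case: (eqVneq k' u) => [->|ku]; first by left.
  case: (eqVneq k' (prv s u)) => [->|kp]; first by right.
  by exfalso; apply: (vertex_avoid sp op hu hk' (elimN eqP ku) (elimN eqP kp) ej).
move=> /K [E|E]; rewrite E in ek'.
  have : seg (vtx s u) oh ov' by rewrite -eh ek'; exact: seg_b.
  case=> t [_ /(congr1 snd) /= e]; move: neg'; rewrite e -h2; lra.
have : seg (vtx s u) ov ov' by rewrite -ev ek'; exact: seg_b.
case=> t [/andP[t0 t1] /(congr1 snd) /= e]; move: neg'; rewrite e; nra.
Qed.

End Main.


Section Final.
Variable R : realType.
Notation pt := (R * R)%type.

Lemma trig_setup (th : R) : 0 < th < pi / 2 ->
  [/\ 0 < cos th, 0 < sin th, adm th (cos th, sin th), adm th (- sin th, cos th)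
    & decomp (cos th, sin th) (- sin th, cos th)].
Proof.
move=> /andP[th0 th1].
have pi0 : 0 < pi / 2 :> R by apply: divr_gt0; [exact: pi_gt0 | lra].
split.
- by apply: cos_gt0_pihalf; apply/andP; split => //; lra.
- by apply: sin_gt0_pihalf; apply/andP; split.
- by exists 1; split; [left | left; rewrite !mul1r].
- by exists 1; split; [left | right; rewrite !mul1r].
- have cs := cos2Dsin2 th.
  move=> w; apply: pt_eq; rewrite /dot /=.
    transitivity (w.1 * (cos th ^+ 2 + sin th ^+ 2)); first by rewrite cs mulr1.
    by ring.
  transitivity (w.2 * (cos th ^+ 2 + sin th ^+ 2)); first by rewrite cs mulr1.
  by ring.
Qed.

Lemma N_setup (s : seq pt) i : (exists k, incident_edge s i k /\ N_edge s k) ->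
  exists k, incident_edge s i k /\ horizontal (vtx s k) (vtx s k.+1) /\ ext_on s k (0, 1).
Proof. by case=> k [ik hk]; exists k; split => //; split; [case: hk | exact: N_ext]. Qed.
Lemma S_setup (s : seq pt) i : (exists k, incident_edge s i k /\ S_edge s k) ->
  exists k, incident_edge s i k /\ horizontal (vtx s k) (vtx s k.+1) /\ ext_on s k (0, -1).
Proof. by case=> k [ik hk]; exists k; split => //; split; [case: hk | exact: S_ext]. Qed.
Lemma E_setup (s : seq pt) i : (exists k, incident_edge s i k /\ E_edge s k) ->
  exists k, incident_edge s i k /\ vertical (vtx s k) (vtx s k.+1) /\ ext_on s k (1, 0).
Proof. by case=> k [ik hk]; exists k; split => //; split; [case: hk | exact: E_ext]. Qed.
Lemma W_setup (s : seq pt) i : (exists k, incident_edge s i k /\ W_edge s k) ->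
  exists k, incident_edge s i k /\ vertical (vtx s k) (vtx s k.+1) /\ ext_on s k (-1, 0).
Proof. by case=> k [ik hk]; exists k; split => //; split; [case: hk | exact: W_ext]. Qed.

Lemma decomp_negs (m m' : pt) : decomp m m' -> decomp (neg m) (neg m').
Proof.
move=> d; apply: decomp_sym; apply: decomp_neg; apply: decomp_sym.
exact: decomp_neg.
Qed.

End Final.

Unset Implicit Arguments.

Theorem lemma4 (R : realType) (s : seq (R * R)) :
  simple_orthogonal_polygon s ->
  (forall u v : nat, NE_reflex s u -> SW_reflex s v ->
     (vtx s u).1 <= (vtx s v).1 -> (vtx s u).2 <= (vtx s v).2 ->
     forall theta : R, 0 < theta < pi / 2 ->
       kernel_theta theta (region s) = set0) /\
  (forall u' v' : nat, NW_reflex s u' -> SE_reflex s v' ->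
     (vtx s v').1 <= (vtx s u').1 -> (vtx s u').2 <= (vtx s v').2 ->
     forall theta : R, 0 < theta < pi / 2 ->
       kernel_theta theta (region s) = set0).
Proof.
move=> hs; split.
- move=> u v [hu [ru [Nu Eu]]] [hv [rv [Sv Wv]]] hx hy th hth.
  have [c0 s0 a1 a2 dec] := trig_setup hth.
  have o12 : dot (cos th, sin th) (- sin th, cos th) = 0 by rewrite /dot /=; ring.
  have [Mu [kh [oh [kv [ov [hkv [eh [h2 [ev [v1 [vp K]]]]]]]]]]] :=
    vertex_main (tau := 1) (rho := 1) hs hu ru (or_introl erefl) (or_introl erefl)
      (N_setup Nu) (E_setup Eu) a1 a2 o12 dec
      ltac:(by rewrite /dot /=; lra) ltac:(by rewrite /dot /=; lra)
      ltac:(by rewrite /dot /=; lra) ltac:(by rewrite /dot /=; lra).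
  have [Mv [kh' [oh' [kv' [ov' [hkv' [eh' [h2' [ev' [v1' [vp' K']]]]]]]]]]] :=
    vertex_main (tau := -1) (rho := -1) hs hv rv (or_intror erefl) (or_intror erefl)
      (S_setup Sv) (W_setup Wv) (adm_neg a1) (adm_neg a2)
      ltac:(by rewrite /dot /neg /=; ring) (decomp_negs dec)
      ltac:(by rewrite /dot /neg /=; lra) ltac:(by rewrite /dot /neg /=; lra)
      ltac:(by rewrite /dot /neg /=; lra) ltac:(by rewrite /dot /neg /=; lra).
  apply/seteqP; split => // p [Pp Kp].
  have Hu := Mu p Pp Kp; have Hv := Mv p Pp Kp.
  rewrite /dot /df /neg /= in Hu Hv.
  have le1 : (vtx s v).1 <= (vtx s u).1 by nra.
  have le2 : (vtx s v).2 <= (vtx s u).2 by nra.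
  have E : vtx s v = vtx s u.
    by apply: pt_eq; apply/eqP; rewrite eq_le ?le1 ?le2 ?hx ?hy.
  rewrite E in ev' vp'.
  apply: (coincide hs hu eh h2 ev _ K hkv' ev'); first lra.
  lra.
- move=> u v [hu [ru [Nu Wu]]] [hv [rv [Sv Ev]]] hx hy th hth.
  have [c0 s0 a1 a2 dec] := trig_setup hth.
  have o21 : dot (- sin th, cos th) (cos th, sin th) = 0 by rewrite /dot /=; ring.
  have [Mu [kh [oh [kv [ov [hkv [eh [h2 [ev [v1 [vp K]]]]]]]]]]] :=
    vertex_main (tau := 1) (rho := -1) hs hu ru (or_introl erefl) (or_intror erefl)
      (N_setup Nu) (W_setup Wu) a2 a1 o21 (decomp_sym dec)
      ltac:(by rewrite /dot /=; lra) ltac:(by rewrite /dot /=; lra)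
      ltac:(by rewrite /dot /=; lra) ltac:(by rewrite /dot /=; lra).
  have [Mv [kh' [oh' [kv' [ov' [hkv' [eh' [h2' [ev' [v1' [vp' K']]]]]]]]]]] :=
    vertex_main (tau := -1) (rho := 1) hs hv rv (or_intror erefl) (or_introl erefl)
      (S_setup Sv) (E_setup Ev) (adm_neg a2) (adm_neg a1)
      ltac:(by rewrite /dot /neg /=; ring) (decomp_negs (decomp_sym dec))
      ltac:(by rewrite /dot /neg /=; lra) ltac:(by rewrite /dot /neg /=; lra)
      ltac:(by rewrite /dot /neg /=; lra) ltac:(by rewrite /dot /neg /=; lra).
  apply/seteqP; split => // p [Pp Kp].
  have Hu := Mu p Pp Kp; have Hv := Mv p Pp Kp.
  rewrite /dot /df /neg /= in Hu Hv.
  have le1 : (vtx s u).1 <= (vtx s v).1 by nra.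
  have le2 : (vtx s v).2 <= (vtx s u).2 by nra.
  have E : vtx s v = vtx s u.
    by apply: pt_eq; apply/eqP; rewrite eq_le ?le1 ?le2 ?hx ?hy.
  rewrite E in ev' vp'.
  apply: (coincide hs hu eh h2 ev _ K hkv' ev'); first lra.
  lra.
Qed.
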